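(* Let $\ell\ge 3$ be a fixed integer. For a positive integer $k$, let $G_{\ell,k}$ be the graph constructed as follows: take disjoint paths $x_{0,r}x_{1,r}\cdots x_{\ell,r}$ for $1\le r\le k$, identify $x_{0,1},\dots,x_{0,k}$ into a single vertex $u$, identify $x_{\ell,1},\dots,x_{\ell,k}$ into a single vertex $v$, and add the edge $uv$. Take $u$ as the special vertex. Then for every $k$ sufficiently large and every $1\le r\le k$, the spectral path from $x_{\ell-1,r}$ to $u$ in $G_{\ell,k}$ has length $\ell-1$, while the distance between $x_{\ell-1,r}$ and $u$ is $2$.
   Context: For a finite connected graph $G$ with Laplacian $L=D-A$ and special vertex $s$ such that $G-s$ is connected, let $L_s$ be $L$ with row and column $s$ deleted, and let $f_s$ be an eigenvector of $L_s$ for its smallest eigenvalue, chosen positive on $V\setminus\{s\}$ (possible by a result of Steinerberger), extended by $f_s(s)=0$. Every vertex $x\ne s$ has a neighbor with strictly smaller $f_s$-value. The spectral tree $T_s$ is formed by joining each vertex $x\neq s$ to a neighbor minimizing $f_s$ (ties broken arbitrarily); the spectral path from $x$ to $s$ is the unique path from $x$ to $s$ in $T_s$. Length of a path is its number of edges. *)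

(* Defs.v *)
From HB Require Import structures.
From mathcomp Require Import all_boot all_order all_algebra.
From mathcomp Require Import reals.
Set Implicit Arguments. Unset Strict Implicit. Unset Printing Implicit Defensive.
Import Order.TTheory GRing.Theory Num.Theory.
Local Open Scope ring_scope.

(* Laplacian L = D - A acting on functions: (L f)(x) = sum_{y ~ x} (f x - f y). *)
Definition lap (R : numDomainType) (V : finType) (adj : rel V) (f : V -> R) (x : V) : R :=
  \sum_(y | adj x y) (f x - f y).

(* g (extended by 0 at s) is an eigenvector of L_s (L with row/column s deleted)
   for eigenvalue mu.  For x <> s, (L_s g)(x) = (L g)(x) since g s = 0. *)
Definition reduced_eigvec (R : numDomainType) (V : finType) (adj : rel V) (s : V)
    (mu : R) (g : V -> R) : Prop :=
  g s = 0 /\ (exists x, g x != 0) /\ (forall x, x != s -> lap adj g x = mu * g x).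

Definition spectral_vector (R : realType) (V : finType) (adj : rel V) (s : V)
    (f : V -> R) : Prop :=
  (forall x, x != s -> 0 < f x) /\
  exists lam : R, reduced_eigvec adj s lam f /\
    (forall (mu : R) (g : V -> R), reduced_eigvec adj s mu g -> lam <= mu).

(* A spectral tree T_s: each x <> s is joined to p x, a neighbour of x
   minimising f (ties broken arbitrarily, i.e. any such choice p). *)
Definition spectral_parent (R : realType) (V : finType) (adj : rel V) (s : V)
    (f : V -> R) (p : V -> V) : Prop :=
  forall x, x != s -> adj x (p x) /\ (forall y, adj x y -> f (p x) <= f y).

Definition spectral_path_length (V : finType) (p : V -> V) (x s : V) (n : nat) : Prop :=
  iter n p x = s /\ (forall m, (m < n)%N -> iter m p x != s).

Definition graph_dist (V : finType) (adj : rel V) (x y : V) (n : nat) : Prop :=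
  (exists w : seq V, [/\ path adj x w, last x w = y & size w = n]) /\
  (forall w : seq V, path adj x w -> last x w = y -> (n <= size w)%N).

Unset Implicit Arguments.

(* Vertices: inl true = u, inl false = v, inr (r, j) = x_{j+1, r}
   (1 <= j+1 <= l-1, r ranging over 'I_k, i.e. the k paths). *)
Definition Gvert (l k : nat) : finType := (bool + ('I_k * 'I_l.-1))%type.

Definition Gu (l k : nat) : Gvert l k := inl true.
Definition Gv (l k : nat) : Gvert l k := inl false.

(* x_{i,r} for 0 <= i <= l (after identifications x_{0,r} = u, x_{l,r} = v).
   The final fallback branch is unreachable for 0 <= i <= l. *)
Definition xv (l k : nat) (r : 'I_k) (i : nat) : Gvert l k :=
  if i == 0%N then Gu l k
  else if i == l then Gv l k
  else match insub i.-1 with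
       | Some j => inr (r, j)
       | None => Gv l k
       end.

Definition Gadj (l k : nat) : rel (Gvert l k) := fun a b =>
  [|| (a == Gu l k) && (b == Gv l k),
      (a == Gv l k) && (b == Gu l k) |
      [exists r : 'I_k, exists i : 'I_l,
         ((a == xv l k r i) && (b == xv l k r i.+1)) ||
         ((b == xv l k r i) && (a == xv l k r i.+1))]].

(* Main.v *)
Require Import Defs.
From HB Require Import structures.
From mathcomp Require Import all_boot all_order all_algebra.
From mathcomp Require Import reals.
From mathcomp Require Import zify ring lra.
Import Order.TTheory GRing.Theory Num.Theory.
Local Open Scope ring_scope.

Lemma inlE (A B : eqType) (a b : A) : (inl a == inl b :> A + B) = (a == b).
Proof. by apply/eqP/eqP => [[]|->]. Qed.
Lemma inrE (A B : eqType) (a b : B) : (inr a == inr b :> A + B) = (a == b).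
Proof. by apply/eqP/eqP => [[]|->]. Qed.
Lemma inlrE (A B : eqType) (a : A) (b : B) : (inl a == inr b :> A + B) = false.
Proof. by apply/eqP. Qed.
Lemma inrlE (A B : eqType) (a : A) (b : B) : (inr b == inl a :> A + B) = false.
Proof. by apply/eqP. Qed.

Lemma xvE l k (r : 'I_k) i (a : Gvert l k) : (0 < l)%N -> (i <= l)%N ->
  (xv l k r i == a) = match a with
    | inl b => if b then i == 0%N else i == l
    | inr (r', j) => (r == r') && (i == j.+1) end.
Proof.
move=> l0 il; rewrite /xv.
have [->|i0] := eqVneq i 0%N.
  by case: a => [[]|[r' j]] //=; rewrite /Gu ?inlE ?inlrE /= ?andbF //; have -> : (0%N == l) = false by lia.
have [->|il'] := eqVneq i l.
  case: a => [[]|[r' j]] //=; rewrite /Gv ?inlE ?inlrE /= ?andbF //; have hj := ltn_ord j; have -> : (l == j.+1) = false by lia.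
  by rewrite andbF.
have hi : (i.-1 < l.-1)%N by lia.
rewrite insubT /=.
case: a => [[]|[r' j]] /=; rewrite ?inrlE // inrE xpair_eqE ; congr (_ && _); rewrite -val_eqE /=; apply/eqP/eqP; lia.
Qed.

Lemma xv0 l k (r : 'I_k) : xv l k r 0 = Gu l k.
Proof. by []. Qed.

Lemma xvl l k (r : 'I_k) : (0 < l)%N -> xv l k r l = Gv l k.
Proof. by move=> l0; rewrite /xv eqxx; have -> : (l == 0%N) = false by lia. Qed.

Lemma xv_int l k (r : 'I_k) i (h0 : (0 < i)%N) (hi : (i < l)%N) (hj : (i.-1 < l.-1)%N) :
  xv l k r i = inr (r, Ordinal hj).
Proof.
rewrite /xv; have -> : (i == 0%N) = false by lia.
have -> : (i == l) = false by lia.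
by rewrite insubT; congr (inr (r, _)); exact: val_inj.
Qed.

Lemma xv_eq l k (r : 'I_k) i j : (0 < l)%N -> (i <= l)%N -> (j <= l)%N ->
  (xv l k r i == xv l k r j) = (i == j).
Proof.
move=> l0 il jl.
case: (posnP j) => [->|j0]; first by rewrite xv0 xvE.
case: (ltngtP j l) => [jl'|jl'|->]; [|by move: jl; rewrite leqNgt jl'|by rewrite xvl // xvE].
have hj : (j.-1 < l.-1)%N by lia.
rewrite (@xv_int l k r j j0 jl' hj) xvE //= eqxx /=; apply/eqP/eqP; lia.
Qed.

Lemma adj_inr l k (r : 'I_k) (j : 'I_l.-1) b : (0 < l)%N ->
  Gadj l k (inr (r, j)) b = (xv l k r j == b) || (xv l k r j.+2 == b).
Proof.
move=> l0; have jl := ltn_ord j.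
rewrite /Gadj /=.
apply/existsP/orP.
- move=> [r' /existsP [i /orP [/andP [h1 h2]|/andP [h1 h2]]]].
  + move: h1; rewrite eq_sym xvE //; last by apply: ltnW.
    move=> /andP [/eqP e1 /eqP e2]; subst r'.
    by right; rewrite eq_sym (eqP h2) e2.
  + move: h2; rewrite eq_sym xvE // => /andP [/eqP e1 /eqP e2]; subst r'.
    by left; rewrite eq_sym (eqP h1); case: e2 => ->.
- move=> [h|h].
  + have hjl : (j < l)%N by lia.
    exists r; apply/existsP; exists (Ordinal hjl).
    apply/orP; right; apply/andP; split; first by rewrite eq_sym.
    by rewrite eq_sym xvE //= !eqxx.
  + have hjl : (j.+1 < l)%N by lia.
    exists r; apply/existsP; exists (Ordinal hjl).
    apply/orP; left; apply/andP; split; last by rewrite eq_sym.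
    rewrite eq_sym xvE //= ?eqxx //; lia.
Qed.

Lemma adj_v l k b : (0 < l)%N ->
  Gadj l k (Gv l k) b = (b == Gu l k) || [exists r, xv l k r l.-1 == b].
Proof.
move=> l0; rewrite /Gadj /=; congr (_ || _).
apply/existsP/existsP => [[r /existsP [i /orP [/andP [h1 h2]|/andP [h1 h2]]]]|[r h]].
- move: h1; rewrite eq_sym xvE //=; last by apply: ltnW.
  by have := ltn_ord i; move=> hi /eqP e; move: hi; rewrite e ltnn.
- move: h2; rewrite eq_sym xvE // => /eqP e; exists r; rewrite eq_sym (eqP h1).
  apply/eqP; congr (xv _ _ _ _); lia.
- have hl : (l.-1 < l)%N by lia.
  exists r; apply/existsP; exists (Ordinal hl).
  apply/orP; right; apply/andP; split; first by rewrite eq_sym.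
  rewrite eq_sym xvE //=; apply/eqP; lia.
Qed.

Lemma lap_inr (R : numDomainType) l k (f : Gvert l k -> R) (r : 'I_k) (j : 'I_l.-1) :
  (0 < l)%N ->
  lap (Gadj l k) f (inr (r, j)) =
  (f (inr (r, j)) - f (xv l k r j)) + (f (inr (r, j)) - f (xv l k r j.+2)).
Proof.
move=> l0; have jl := ltn_ord j.
rewrite /lap -big_filter (perm_big [:: xv l k r j; xv l k r j.+2]).
  by rewrite !big_cons big_nil /= addr0.
apply: uniq_perm.
- by rewrite filter_uniq // index_enum_uniq.
- rewrite /= andbT inE xv_eq //; lia.
- by move=> y; rewrite mem_filter mem_index_enum andbT adj_inr // !inE (eq_sym y) (eq_sym y).
Qed.

Lemma lap_v (R : numDomainType) l k (f : Gvert l k -> R) : (2 <= l)%N ->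
  lap (Gadj l k) f (Gv l k) =
  (f (Gv l k) - f (Gu l k)) + \sum_(r < k) (f (Gv l k) - f (xv l k r l.-1)).
Proof.
move=> l2; have l0 : (0 < l)%N by lia.
have h0 : (0 < l.-1)%N by lia.
have hi : (l.-1 < l)%N by lia.
have hj : (l.-1.-1 < l.-1)%N by lia.
rewrite /lap -big_filter (perm_big (Gu l k :: [seq xv l k r l.-1 | r <- enum 'I_k])).
  by rewrite big_cons big_map big_enum.
apply: uniq_perm.
- by rewrite filter_uniq // index_enum_uniq.
- rewrite /= map_inj_uniq ?enum_uniq ?andbT.
    apply/mapP => [[r _ /eqP]]; rewrite eq_sym xvE //=; last by lia.
    by apply/negP; lia.
  by move=> r1 r2; rewrite !(@xv_int l k _ _ h0 hi hj) => [[]].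
- move=> y; rewrite mem_filter mem_index_enum andbT adj_v // inE.
  congr (_ || _); apply/existsP/mapP => [[r /eqP <-]|[r _ ->]].
    by exists r; rewrite ?mem_enum.
  by exists r.
Qed.
Lemma seqlem (R : realFieldType) (n k : nat) (lam : R) (a : nat -> R) :
  a 0%N = 0 ->
  (forall i, (0 < i <= n.+2)%N -> 0 < a i) ->
  (forall j, (j.+2 <= n.+2)%N -> (a j.+1 - a j) + (a j.+1 - a j.+2) = lam * a j.+1) ->
  a n.+2 + (a n.+2 - a n.+1) *+ k = lam * a n.+2 ->
  (2 * (n.+2) ^ 2 <= k)%N ->
  forall i, (0 < i < n.+2)%N -> a i.-1 < a i.+1.
Proof.
move=> a0 apos hrec hv hk.
pose e j := a j.+1 - a j.
have rec : forall j, (j <= n)%N -> e j.+1 = e j - lam * a j.+1.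
  by move=> j hj; have := hrec j ltac:(lia); rewrite /e; lra.
have a1 : 0 < a 1%N by apply: apos.
have kpos : (0 < k)%N by lia.
have kR : (0 : R) < k%:R by rewrite ltr0n.
have veq : a n.+2 + k%:R * e n.+1 = lam * a n.+2 by rewrite /e mulr_natl.
have an2 : 0 < a n.+2 by apply: apos; lia.
have lampos : 0 < lam.
  rewrite ltNge; apply/negP => hle.
  have h : forall j, (j <= n.+1)%N -> a 1%N <= e j.
    elim=> [|j IH] hj; first by rewrite /e a0 subr0.
    rewrite rec; last by lia.
    have := IH ltac:(lia); have : 0 < a j.+1 by apply: apos; lia.
    nra.
  have := h n.+1 (leqnn _); nra.
have mono : forall j d, (j + d <= n.+1)%N -> e (j + d)%N <= e j.
  move=> j; elim=> [|d IH] hd; first by rewrite addn0.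
  rewrite addnS rec; last by lia.
  have := IH ltac:(lia); have : 0 < a (j + d).+1 by apply: apos; lia.
  nra.
have aub : forall j, (j <= n.+2)%N -> a j <= j%:R * a 1%N.
  elim=> [|j IH] hj; first by rewrite a0 mul0r.
  have : e j <= e 0%N by have := mono 0%N j ltac:(lia).
  have := IH ltac:(lia); rewrite -natr1 /e a0 subr0; lra.
have elb : forall j, (j <= n.+1)%N ->
    a 1%N - lam * (j%:R * ((n.+2)%:R * a 1%N)) <= e j.
  elim=> [|j IH] hj; first by rewrite mul0r mulr0 subr0 /e a0 subr0.
  rewrite rec; last by lia.
  have h1 : a j.+1 <= (n.+2)%:R * a 1%N.
    apply: le_trans (aub j.+1 _) _; first by lia. apply: ler_wpM2r; first lra.
    by rewrite ler_nat; lia.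
  have h2 : lam * a j.+1 <= lam * ((n.+2)%:R * a 1%N) by apply: ler_wpM2l; lra.
  have := IH ltac:(lia); rewrite -natr1; nra.
have key : 0 < e n + e n.+1.
  have rn := rec n (leqnn _).
  have ha : 0 < a n.+1 by apply: apos; lia.
  case: (lerP 1 lam) => hl1.
    have : 0 <= e n.+1.
      have : 0 <= k%:R * e n.+1 by nra.
      rewrite pmulr_rge0 //.
    nra.
  have en : e n.+1 < 0 by nra.
  have := elb n.+1 (leqnn _).
  set M := (n.+1)%:R; set N := (n.+2)%:R.
  have MN : M <= N by rewrite ler_nat.
  have M0 : 0 <= M by rewrite ler0n.
  have hkN : 2 * N ^+ 2 <= k%:R.
    by rewrite /N -natrX -(natrM R 2) ler_nat.
  move=> hel.
  have h3 : 1 < lam * (M * N).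
    have : a 1%N < lam * (M * N) * a 1%N by nra.
    rewrite -ltr_pdivrMr // divff ?mulr1 //; lra.
  have h4 : 2 < lam * k%:R.
    have : lam * (M * N) <= lam * (N * N) by apply: ler_wpM2l; nra.
    have : lam * (2 * N ^+ 2) <= lam * k%:R by apply: ler_wpM2l; lra.
    rewrite expr2; nra.
  have e1 : a n.+1 = a n.+2 - e n.+1 by rewrite /e; lra.
  have : 0 < k%:R * (e n + e n.+1).
    rewrite rn e1.
    have : k%:R * e n.+1 = (lam - 1) * a n.+2 by lra.
    nra.
  by rewrite pmulr_rgt0.
move=> [|j] // /andP [_ hj] /=.
have h1 := mono j (n - j)%N ltac:(lia).
have h2 := mono j.+1 (n - j)%N ltac:(lia).
have q1 : (j + (n - j))%N = n by lia.
have q2 : (j.+1 + (n - j))%N = n.+1 by lia.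
rewrite q1 in h1; rewrite q2 in h2.
move: h1 h2 key; rewrite /e; lra.
Qed.

Lemma scale (R : realFieldType) (N : nat) (lam : R) (a b : nat -> R) :
  a 0%N = 0 -> b 0%N = 0 -> a 1%N != 0 ->
  (forall j, (j.+2 <= N)%N -> (a j.+1 - a j) + (a j.+1 - a j.+2) = lam * a j.+1) ->
  (forall j, (j.+2 <= N)%N -> (b j.+1 - b j) + (b j.+1 - b j.+2) = lam * b j.+1) ->
  forall i, (i <= N)%N -> b i = (b 1%N / a 1%N) * a i.
Proof.
move=> a0 b0 a1 ha hb.
set t := b 1%N / a 1%N.
have claim : forall i, (i.+1 <= N)%N -> b i = t * a i /\ b i.+1 = t * a i.+1.
  elim=> [|i IH] hi; first by rewrite a0 b0 mulr0 /t divfK.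
  have [IH1 IH2] := IH ltac:(lia).
  split => //.
  have eb : b i.+2 = 2 * b i.+1 - b i - lam * b i.+1 by have := hb i hi; lra.
  have ea : a i.+2 = 2 * a i.+1 - a i - lam * a i.+1 by have := ha i hi; lra.
  rewrite eb ea IH1 IH2; ring.
move=> [|i] hi; first by rewrite a0 b0 mulr0.
by have [] := claim i hi.
Qed.

Theorem theorem17 (R : realType) (l : nat) (hl : (3 <= l)%N) :
  exists K : nat, forall k : nat, (K <= k)%N -> forall r : 'I_k,
    (forall (f : Gvert l k -> R) (p : Gvert l k -> Gvert l k),
        spectral_vector (Gadj l k) (Gu l k) f ->
        spectral_parent (Gadj l k) (Gu l k) f p ->
        spectral_path_length p (xv l k r l.-1) (Gu l k) l.-1) /\
    graph_dist (Gadj l k) (xv l k r l.-1) (Gu l k) 2.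
Proof.
case: l hl => [|[|[|m]]] // _.
exists (2 * (m.+3) ^ 2)%N => k hk r.
have l0 : (0 < m.+3)%N by [].
have hjm : (m.+2.-1 < m.+3.-1)%N by [].
have xm := @xv_int m.+3 k r m.+2 isT (ltnSn _) hjm.
split.
- move=> f p [fpos [lam [[fu [_ feq]] _]]] hpar /=.
  pose a (r' : 'I_k) i := f (xv m.+3 k r' i).
  have a0 : forall r', a r' 0%N = 0 by move=> r'; rewrite /a xv0.
  have apos : forall r' i, (0 < i <= m.+3)%N -> 0 < a r' i.
    move=> r' i /andP [i0 il]; apply: fpos; rewrite /Gu xvE //=; lia.
  have arec : forall r' j, (j.+2 <= m.+3)%N ->
      (a r' j.+1 - a r' j) + (a r' j.+1 - a r' j.+2) = lam * a r' j.+1.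
    move=> r' j hj.
    have hj' : (j.+1.-1 < m.+3.-1)%N by lia.
    have hx := @xv_int m.+3 k r' j.+1 isT hj hj'.
    rewrite /a hx.
    have := feq (inr (r', Ordinal hj')) isT.
    by rewrite lap_inr.
  have aVl : forall r', a r' m.+3 = f (Gv m.+3 k) by move=> r'; rewrite /a xvl.
  have sym : forall r', a r' m.+2 = a r m.+2.
    move=> r'.
    have a1 : a r 1%N != 0 by rewrite gt_eqF // apos.
    have hs := @scale _ m.+3 lam (a r) (a r') (a0 r) (a0 r') a1 (arec r) (arec r').
    have ht : a r' 1%N / a r 1%N = 1.
      have := hs m.+3 (leqnn _); rewrite !aVl => e.
      have hv : 0 < f (Gv m.+3 k) by rewrite -(aVl r) apos.
      apply: (mulIf (lt0r_neq0 hv)); by rewrite mul1r -e.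
    by rewrite (hs m.+2 (leqnSn _)) ht mul1r.
  have vv : a r m.+3 + (a r m.+3 - a r m.+2) *+ k = lam * a r m.+3.
    have := feq (Gv m.+3 k) isT.
    rewrite lap_v // fu subr0 /=.
    rewrite (eq_bigr (fun _ => a r m.+3 - a r m.+2)); last first.
      by move=> r' _; rewrite -(sym r') aVl.
    by rewrite sumr_const card_ord aVl.
  have incr := @seqlem _ m.+1 k lam (a r) (a0 r) (apos r) (arec r) vv hk.
  have par : forall i, (0 < i < m.+3)%N -> p (xv m.+3 k r i) = xv m.+3 k r i.-1.
    move=> i /andP [i0 il].
    have hj : (i.-1 < m.+3.-1)%N by lia.
    rewrite (@xv_int m.+3 k r i i0 il hj).
    have [hadj hmin] := hpar (inr (r, Ordinal hj)) isT.
    move: hadj; rewrite adj_inr //= => /orP [/eqP <- //|/eqP hp].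
    exfalso.
    have := hmin (xv m.+3 k r i.-1); rewrite adj_inr //= eqxx => /(_ isT).
    rewrite -hp.
    have -> : i.-1.+2 = i.+1 by lia.
    have := incr i ltac:(lia); rewrite /a; lra.
  have it : forall t, (t <= m.+2)%N -> iter t p (xv m.+3 k r m.+2) = xv m.+3 k r (m.+2 - t).
    elim=> [|t IH] ht; first by rewrite subn0.
    rewrite iterS IH; last by lia.
    rewrite par; last by lia.
    congr (xv _ _ _ _); lia.
  split.
    by rewrite it // subnn.
  move=> t ht; rewrite it; last by lia.
  rewrite /Gu xvE //=; lia.
- split.
    exists [:: Gv m.+3 k; Gu m.+3 k]; split => //=.
    rewrite xm adj_inr //= xvl // eqxx orbT /=.
    by [].
  move=> [|y [|z w]] /=.
  - by move=> _ /eqP h; rewrite xm in h.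
  - rewrite andbT xm adj_inr //= xvl // => hadj hy; subst y.
    move: hadj; rewrite /Gu /Gv inlE /= orbF.
    have h1 : (m.+1.-1 < m.+3.-1)%N by [].
    by rewrite (@xv_int m.+3 k r m.+1 isT (leqnSn _) h1) => /eqP.
  - by [].
Qed.
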